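(* Let $(\mathfrak g,\mathfrak g_1,\mathfrak g_2)$ be a quasi-double Lie algebra with maps $\psi,\mu$, and for $x\in\mathfrak g_2$, $\xi\in\mathfrak g_1$ let $x^\xi\in\mathfrak g_2$ denote the $\mathfrak g_2$-component of $[x,\xi]_{\mathfrak g}$ in the decomposition $\mathfrak g=\mathfrak g_1\oplus\mathfrak g_2$. Define $[x,y]_{\mathfrak g_2}=\mu(x,y)$ and $\langle x,y,z\rangle=\frac12\,x^{\psi(y,z)}$ for $x,y,z\in\mathfrak g_2$. Then $(\mathfrak g_2,[\cdot,\cdot]_{\mathfrak g_2},\langle\cdot,\cdot,\cdot\rangle)$ is an Akivis algebra.
   Context: A quasi-double Lie algebra is a triple $(\mathfrak g,\mathfrak g_1,\mathfrak g_2)$ where $\mathfrak g$ is a Lie algebra, $\mathfrak g_1$ a Lie subalgebra, and $\mathfrak g_2$ a linear subspace equipped with antisymmetric bilinear maps $\psi:\Lambda^2\mathfrak g_2\to\mathfrak g_1$, $\mu:\Lambda^2\mathfrak g_2\to\mathfrak g_2$ such that $\mathfrak g=\mathfrak g_1\oplus\mathfrak g_2$ as vector spaces and $[x,y]_{\mathfrak g}=\psi(x,y)+\mu(x,y)$ for all $x,y\in\mathfrak g_2$. An Akivis algebra $(A,[\cdot,\cdot],\langle\cdot,\cdot,\cdot\rangle)$ is a vector space $A$ with an antisymmetric bilinear map $[\cdot,\cdot]:A\times A\to A$ and a trilinear map $\langle\cdot,\cdot,\cdot\rangle:A\times A\times A\to A$ such that $\sum_{\sigma\in S_3}\mathrm{sign}(\sigma)\langle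 x_{\sigma(1)},x_{\sigma(2)},x_{\sigma(3)}\rangle=\sum_{\circlearrowleft}[[x_1,x_2],x_3]$ for all $x_1,x_2,x_3\in A$, the right side being the sum over cyclic permutations of $(x_1,x_2,x_3)$. *)

(* Defs.v *)
From mathcomp Require Import all_boot all_algebra.
Set Implicit Arguments. Unset Strict Implicit. Unset Printing Implicit Defensive.
Import GRing.Theory.
Local Open Scope ring_scope.

Definition subspace (K : fieldType) (V : lmodType K) (A : {pred V}) : Prop :=
  0 \in A /\ (forall (a : K) (x y : V), x \in A -> y \in A -> a *: x + y \in A).

Definition bilinear_on (K : fieldType) (V : lmodType K) (A : {pred V})
    (f : V -> V -> V) : Prop :=
  (forall (a : K) (x y z : V), x \in A -> y \in A -> z \in A ->
      f (a *: x + y) z = a *: f x z + f y z) /\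
  (forall (a : K) (x y z : V), x \in A -> y \in A -> z \in A ->
      f z (a *: x + y) = a *: f z x + f z y).

Definition trilinear_on (K : fieldType) (V : lmodType K) (A : {pred V})
    (f : V -> V -> V -> V) : Prop :=
  (forall (a : K) (x y u v : V), x \in A -> y \in A -> u \in A -> v \in A ->
      f (a *: x + y) u v = a *: f x u v + f y u v) /\
  (forall (a : K) (x y u v : V), x \in A -> y \in A -> u \in A -> v \in A ->
      f u (a *: x + y) v = a *: f u x v + f u y v) /\
  (forall (a : K) (x y u v : V), x \in A -> y \in A -> u \in A -> v \in A ->
      f u v (a *: x + y) = a *: f u v x + f u v y).

Definition lie_algebra (K : fieldType) (V : lmodType K) (br : V -> V -> V) : Prop :=
  bilinear_on [pred _ : V | true] br /\
  (forall x, br x x = 0) /\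
  (forall x y z, br x (br y z) + br y (br z x) + br z (br x y) = 0).

(* Quasi-double Lie algebra (g, g1, g2) with maps psi, mu
   (psi, mu : Lambda^2 g2 -> g1, g2 are modelled as functions V -> V -> V,
   only their values on g2 matter). *)
Definition quasi_double (K : fieldType) (V : lmodType K) (br : V -> V -> V)
    (g1 g2 : {pred V}) (psi mu : V -> V -> V) : Prop :=
  [/\ lie_algebra br,
      subspace g1 /\ (forall x y, x \in g1 -> y \in g1 -> br x y \in g1),
      subspace g2,
      (forall v, exists a b, [/\ a \in g1, b \in g2 & v = a + b]) /\
      (forall v, v \in g1 -> v \in g2 -> v = 0) &
      [/\ forall x y, x \in g2 -> y \in g2 -> psi x y \in g1 /\ mu x y \in g2,
          bilinear_on g2 psi /\ bilinear_on g2 mu,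
          forall x, x \in g2 -> psi x x = 0 /\ mu x x = 0 &
          forall x y, x \in g2 -> y \in g2 -> br x y = psi x y + mu x y]].

Definition akivis (K : fieldType) (V : lmodType K) (A : {pred V})
    (br : V -> V -> V) (tri : V -> V -> V -> V) : Prop :=
  [/\ forall x y, x \in A -> y \in A -> br x y \in A,
      forall x y z, x \in A -> y \in A -> z \in A -> tri x y z \in A,
      bilinear_on A br /\ (forall x y, x \in A -> y \in A -> br x y = - br y x),
      trilinear_on A tri &
      forall x1 x2 x3, x1 \in A -> x2 \in A -> x3 \in A ->
        tri x1 x2 x3 + tri x2 x3 x1 + tri x3 x1 x2
        - tri x2 x1 x3 - tri x3 x2 x1 - tri x1 x3 x2
        = br (br x1 x2) x3 + br (br x2 x3) x1 + br (br x3 x1) x2].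

(* Main.v *)
Require Import Defs.
From mathcomp Require Import all_boot all_algebra.
From mathcomp Require Import ring.
Import GRing.Theory.
Local Open Scope ring_scope.

Lemma lin_help (K : fieldType) (V W : lmodType K) (A : {pred V}) (g : V -> W) :
  0 \in A ->
  (forall a x y, x \in A -> y \in A -> g (a *: x + y) = a *: g x + g y) ->
  [/\ g 0 = 0, (forall x y, x \in A -> y \in A -> g (x + y) = g x + g y),
      (forall a x, x \in A -> g (a *: x) = a *: g x) &
      (forall x, x \in A -> g (- x) = - g x)].
Proof.
move=> A0 H.
have g0 : g 0 = 0.
  have := H 1 0 0 A0 A0; rewrite !scale1r addr0 => e.
  by apply/(@addrI _ (g 0)); rewrite addr0 -e.
have gZ : forall a x, x \in A -> g (a *: x) = a *: g x.
  by move=> a x hx; have := H a x 0 hx A0; rewrite !addr0 g0 addr0.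
split => //.
- by move=> x y hx hy; have := H 1 x y hx hy; rewrite !scale1r.
- by move=> x hx; rewrite -scaleN1r gZ // scaleN1r.
Qed.

Lemma fin_id (W : zmodType) (a1 a2 a3 p1 p2 p3 : W) :
  p3 + p1 + p2 = 0 -> a1 + a2 + a3 = a3 - p3 + (a1 - p1) + (a2 - p2).
Proof.
move=> J; rewrite (addrACA a3) (addrACA (a3 + a1)) -!opprD J oppr0 addr0.
by rewrite [LHS]addrC addrA.
Qed.

Theorem mainTheorem4 (K : fieldType) (V : lmodType K) (br : V -> V -> V)
    (g1 g2 : {pred V}) (psi mu : V -> V -> V) (pr2 : V -> V) :
  (2%:R : K) != 0 ->
  quasi_double br g1 g2 psi mu ->
  (* pr2 is the projection onto g2 along g1 *)
  (forall v, pr2 v \in g2 /\ v - pr2 v \in g1) ->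
  akivis g2 mu (fun x y z => (2%:R : K)^-1 *: pr2 (br x (psi y z))).
Proof.
move=> h2 [[[brL brR] [brxx jac]] [[g10 g1s] g1br] [g20 g2s] [decomp g12]
  [pmin [[psiL psiR] [muL muR]] pmxx brpm]] hpr.
have brL' : forall a x y z, br (a *: x + y) z = a *: br x z + br y z.
  by move=> a x y z; apply: brL.
have brR' : forall a x y z, br z (a *: x + y) = a *: br z x + br z y.
  by move=> a x y z; apply: brR.
have g2D : forall x y, x \in g2 -> y \in g2 -> x + y \in g2.
  by move=> x y hx hy; rewrite -[x]scale1r; apply: g2s.
have g2Z : forall (a : K) x, x \in g2 -> a *: x \in g2.
  by move=> a x hx; rewrite -[a *: x]addr0; apply: g2s.
have g2N : forall x, x \in g2 -> - x \in g2.
  by move=> x hx; rewrite -scaleN1r; apply: g2Z.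
have g1D : forall x y, x \in g1 -> y \in g1 -> x + y \in g1.
  by move=> x y hx hy; rewrite -[x]scale1r; apply: g1s.
have g1Z : forall (a : K) x, x \in g1 -> a *: x \in g1.
  by move=> a x hx; rewrite -[a *: x]addr0; apply: g1s.
have g1N : forall x, x \in g1 -> - x \in g1.
  by move=> x hx; rewrite -scaleN1r; apply: g1Z.
have pr2U : forall v p, p \in g2 -> v - p \in g1 -> pr2 v = p.
  move=> v p hp hvp; have [h1 h1'] := hpr v.
  apply/eqP; rewrite -subr_eq0; apply/eqP; apply: g12.
    have -> : pr2 v - p = (v - p) + - (v - pr2 v).
      by rewrite opprB [RHS]addrC [RHS]addrA subrK.
    by apply: g1D => //; apply: g1N.
  by apply: g2D => //; apply: g2N.
have pr2_g2 : forall x, x \in g2 -> pr2 x = x.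
  by move=> x hx; apply: pr2U => //; rewrite subrr.
have pr2_g1 : forall x, x \in g1 -> pr2 x = 0.
  by move=> x hx; apply: pr2U => //; rewrite subr0.
have pr2D : forall u v, pr2 (u + v) = pr2 u + pr2 v.
  move=> u v; have [hu hu'] := hpr u; have [hv hv'] := hpr v.
  apply: pr2U; first exact: g2D.
  by rewrite opprD addrACA; apply: g1D.
have pr2Z : forall a u, pr2 (a *: u) = a *: pr2 u.
  move=> a u; have [hu hu'] := hpr u.
  apply: pr2U; first exact: g2Z.
  by rewrite -scalerBr; apply: g1Z.
have pr2N : forall u, pr2 (- u) = - pr2 u.
  by move=> u; rewrite -scaleN1r pr2Z scaleN1r.
have brLin : forall z, _ := fun z => @lin_help _ _ _ [pred _ : V | true] (br z) isT (fun a x y _ _ => brR' a x y z).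
have brD : forall z x y, br z (x + y) = br z x + br z y.
  by move=> z x y; have [_ H _ _] := brLin z; exact: H.
have brN : forall z x, br z (- x) = - br z x.
  by move=> z x; have [_ _ _ H] := brLin z; exact: H.
have antisym : forall f : V -> V -> V, bilinear_on g2 f ->
    (forall x, x \in g2 -> f x x = 0) ->
    forall x y, x \in g2 -> y \in g2 -> f x y = - f y x.
  move=> f [fL fR] fxx x y hx hy.
  have hxy := g2D _ _ hx hy.
  have [_ fD1 _ _] := @lin_help _ _ _ g2 _ g20 (fun a x' y' hx' hy' => fL a x' y' (x + y) hx' hy' hxy).
  have [_ fDx _ _] := @lin_help _ _ _ g2 _ g20 (fun a x' y' hx' hy' => fR a x' y' x hx' hy' hx).
  have [_ fDy _ _] := @lin_help _ _ _ g2 _ g20 (fun a x' y' hx' hy' => fR a x' y' y hx' hy' hy).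
  have := fxx _ hxy; rewrite fD1 // fDx // fDy // !fxx // add0r addr0.
  by move/eqP; rewrite addr_eq0 => /eqP.
have psiA := antisym psi (conj psiL psiR) (fun x hx => (pmxx x hx).1).
have muA := antisym mu (conj muL muR) (fun x hx => (pmxx x hx).2).
split.
- by move=> x y hx hy; exact: (pmin x y hx hy).2.
- by move=> x y z _ _ _; apply: g2Z; exact: (hpr _).1.
- by split; [exact: (conj muL muR) | exact: muA].
- split; [|split].
  + move=> a x y u v hx hy hu hv.
    by rewrite brL' pr2D pr2Z scalerDr !scalerA mulrC.
  + move=> a x y u v hx hy hu hv.
    by rewrite psiL // brR' pr2D pr2Z scalerDr !scalerA mulrC.
  + move=> a x y u v hx hy hu hv.
    by rewrite psiR // brR' pr2D pr2Z scalerDr !scalerA mulrC.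
move=> x1 x2 x3 h1 h2' h3.
have key : forall x y z, x \in g2 -> y \in g2 -> z \in g2 ->
    mu (mu x y) z = pr2 (br z (psi x y)) - pr2 (br z (br x y)).
  move=> x y z hx hy hz.
  have hm := (pmin x y hx hy).2.
  rewrite (brpm x y) // brD (brpm z (mu x y)) // !pr2D (pr2_g1 _ (pmin _ _ hz hm).1) add0r.
  idtac.
  rewrite (pr2_g2 _ (pmin _ _ hz hm).2) (muA z) //.
  by rewrite opprD opprK addrA subrr add0r.
have hh : forall u : V, (2%:R : K)^-1 *: u + (2%:R : K)^-1 *: u = u.
  have e : ((2%:R : K)^-1 + 2%:R^-1) = 1 by field.
  by move=> u; rewrite -scalerDl e scale1r.
rewrite (psiA x1 x3) // (psiA x2 x1) // (psiA x3 x2) // !brN !pr2N !scalerN !opprK.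
rewrite !key //.
have J := jac x3 x1 x2.
set A1 := pr2 (br x1 (psi x2 x3)).
set A2 := pr2 (br x2 (psi x3 x1)).
set A3 := pr2 (br x3 (psi x1 x2)).
rewrite (ACl (1*6*(2*4)*(3*5))%AC) /= !hh.
apply: fin_id.
by rewrite -!pr2D J pr2_g1.
Qed.
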